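(* Let $n\ge2$ be even. For odd $k\ge1$, define $f_k[x_ix_j]=(x_i-x_j)^k$ in $\mathbb Q[x_1,\ldots,x_n]$. Then $$f_{n-1}[x_1\ldots x_n]=(-1)^{\binom{n/2}{2}}\Big(\prod_{k=0}^{n/2-1}\binom{n-1}{k}\Big)\prod_{1\le i<j\le n}(x_i-x_j).$$ Moreover, $f_{2m-1}[x_1\ldots x_n]=0$ whenever $m\ge1$ and $2m<n$.
   Context: For a skew-symmetric assignment $g[x_ix_j]=-g[x_jx_i]$, the Pfaffian is $$g[x_1\ldots x_n]=\sum s(x_1\ldots x_n,y_1\ldots y_n)\,g[y_1y_2]\cdots g[y_{n-1}y_n],$$ where the sum is over all partitions of $\{x_1,\ldots,x_n\}$ into pairs $\{y_1,y_2\},\ldots,\{y_{n-1},y_n\}$. The sign $s(x_1\ldots x_n,y_1\ldots y_n)$ is the sign of the permutation taking $x_1\ldots x_n$ to $y_1\ldots y_n$, and each summand is independent of how the pairing is listed. *)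

(* Defs.v *)
From HB Require Import structures.
From mathcomp Require Import all_boot all_order all_algebra all_fingroup.
From mathcomp Require Import mpoly.
Set Implicit Arguments. Unset Strict Implicit. Unset Printing Implicit Defensive.
Import GRing.Theory.
Local Open Scope ring_scope.

Lemma half_le_self (n : nat) : (n./2 <= n)%N.
Proof. by rewrite leq_half_double -addnn ltnW // ltnS leq_addr. Qed.

(* The position k (0-based) in 'I_n, for k = 2i or 2i+1 with i < n/2;
   i itself (< n) is only used as a dummy default (never reached when n is even). *)
Definition pos (n : nat) (i : 'I_n./2) (k : nat) : 'I_n :=
  insubd (widen_ord (half_le_self n) i) k.

(* Canonical listing of a perfect matching of 'I_n (n even): the permutation s
   lists the pairs {s(0),s(1)}, {s(2),s(3)}, ... with s(2i) < s(2i+1) and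
   s(0) < s(2) < s(4) < ... .  Every partition of 'I_n into pairs has exactly
   one such listing. *)
Definition canon_pairing (n : nat) (s : 'S_n) : bool :=
  [forall i : 'I_n./2, (s (pos i (2 * i)) < s (pos i (2 * i).+1))%N] &&
  [forall i : 'I_n./2, forall j : 'I_n./2,
      (i < j)%N ==> (s (pos i (2 * i)) < s (pos j (2 * j)))%N].

Definition pfaffian (R : comRingType) (n : nat) (g : 'I_n -> 'I_n -> R) : R :=
  \sum_(s : 'S_n | canon_pairing s)
     (-1) ^+ odd_perm s * \prod_(i < n./2) g (s (pos i (2 * i))) (s (pos i (2 * i).+1)).

(* Main.v *)
Require Import Defs.
From HB Require Import structures.
From mathcomp Require Import all_boot all_order all_algebra all_fingroup.
From mathcomp Require Import mpoly.
From mathcomp Require Import zify.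
Set Implicit Arguments. Unset Strict Implicit. Unset Printing Implicit Defensive.
Import GRing.Theory.
Local Open Scope ring_scope.
Section Basic.
Variable n : nat.
Hypothesis hev : ~~ odd n.
Local Notation h := n./2.

Lemma nE : n = (2 * h)%N.
Proof. have := odd_double_half n; rewrite (negbTE hev); lia. Qed.

Lemma dblE : (n./2).*2 = n.
Proof. have := odd_double_half n; rewrite (negbTE hev) add0n; exact. Qed.

Definition eo (i : 'I_h) : 'I_n := pos i (2 * i).
Definition od (i : 'I_h) : 'I_n := pos i (2 * i).+1.

Lemma val_eo i : val (eo i) = (2 * i)%N.
Proof. rewrite /eo /pos val_insubd; have := ltn_ord i; have := nE; case: ifP => //; lia. Qed.
Lemma val_od i : val (od i) = (2 * i).+1.
Proof. rewrite /od /pos val_insubd; have := ltn_ord i; have := nE; case: ifP => //; lia. Qed.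

Lemma hf_lt (k : 'I_n) : (k./2 < h)%N.
Proof. have := ltn_ord k; have := nE; have := odd_double_half k; lia. Qed.
Definition hf (k : 'I_n) : 'I_h := Ordinal (hf_lt k).

Definition io (k : 'I_n) : 'I_n := insubd k (if odd k then k.-1 else k.+1).
Lemma val_io k : val (io k) = if odd k then k.-1 else k.+1.
Proof.
rewrite /io val_insubd; have := ltn_ord k; have := nE; have := odd_double_half k.
by case: (odd k) => /=; case: ifP => //; lia.
Qed.

Definition mk (i : 'I_h) (b : bool) : 'I_n := if b then od i else eo i.

Lemma val_mk i b : val (mk i b) = (2 * i + b)%N.
Proof. by case: b; rewrite /mk ?val_eo ?val_od; lia. Qed.

Lemma hf_mk i b : hf (mk i b) = i.
Proof. apply: val_inj => /=; rewrite val_mk; case: b => /=; lia. Qed.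
Lemma odd_mk i b : odd (mk i b) = b.
Proof. by rewrite val_mk oddD oddM /=; case: b. Qed.
Lemma mk_hf k : mk (hf k) (odd k) = k.
Proof. apply: val_inj; rewrite val_mk /hf /=; have := odd_double_half k; lia. Qed.
Lemma mk_inj i j b c : mk i b = mk j c -> i = j /\ b = c.
Proof. move=> E; split; [by rewrite -(hf_mk i b) E hf_mk | by rewrite -(odd_mk i b) E odd_mk]. Qed.
Lemma hf_eo i : hf (eo i) = i. Proof. exact: (hf_mk i false). Qed.
Lemma hf_od i : hf (od i) = i. Proof. exact: (hf_mk i true). Qed.
Lemma odd_eo i : odd (eo i) = false. Proof. exact: (odd_mk i false). Qed.
Lemma odd_od i : odd (od i) = true. Proof. exact: (odd_mk i true). Qed.

Lemma io_mk i b : io (mk i b) = mk i (~~ b).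
Proof.
apply: val_inj; rewrite val_io odd_mk !val_mk; case: b => /=; lia.
Qed.
Lemma io_eo i : io (eo i) = od i. Proof. exact: (io_mk i false). Qed.
Lemma io_od i : io (od i) = eo i. Proof. exact: (io_mk i true). Qed.
Lemma ioK : involutive io.
Proof. by move=> k; rewrite -(mk_hf k) !io_mk negbK. Qed.
Lemma hf_io k : hf (io k) = hf k.
Proof. by rewrite -{1}(mk_hf k) io_mk hf_mk. Qed.
Lemma odd_io k : odd (io k) = ~~ odd k.
Proof. by rewrite -{1}(mk_hf k) io_mk odd_mk. Qed.
Lemma io_neq k : io k != k.
Proof. by apply/eqP => E; have := odd_io k; rewrite E; case: (odd k). Qed.

Definition iop : 'S_n := perm (can_inj ioK).
Lemma iopE k : iop k = io k. Proof. by rewrite permE. Qed.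

End Basic.
Section Sign.
Variable n : nat.
Hypothesis hev : ~~ odd n.
Local Notation h := n./2.
Local Notation eo := (@eo n).
Local Notation od := (@od n).
Local Notation mk := (@mk n).
Local Notation hf := (hf hev).
Local Notation io := (@io n).
Let io_mk := io_mk hev. Let io_eo := io_eo hev. Let io_od := io_od hev.
Let hf_io := hf_io hev. Let odd_io := odd_io hev.

Lemma mkP (k : 'I_n) : exists i b, k = mk i b.
Proof. by exists (hf k), (odd k); rewrite mk_hf. Qed.

Lemma eo_inj : injective eo.
Proof. by move=> i j E; have [] := mk_inj hev (b := false) (c := false) E. Qed.
Lemma od_inj : injective od.
Proof. by move=> i j E; have [] := mk_inj hev (b := true) (c := true) E. Qed.
Lemma mk_neq i j b c : b != c -> mk i b != mk j c.
Proof. by move=> bc; apply/eqP => /(mk_inj hev) [_ E]; rewrite E eqxx in bc. Qed.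
Lemma mk_neqi i j b c : i != j -> mk i b != mk j c.
Proof. by move=> bc; apply/eqP => /(mk_inj hev) [E _]; rewrite E eqxx in bc. Qed.
Lemma eo_od_neq i j : eo i != od j.
Proof. exact: (mk_neq i j (b := false) (c := true)). Qed.

Lemma tperm_io i k : tperm (eo i) (od i) k = if hf k == i then io k else k.
Proof.
have [i0 [b0 ->]] := mkP k; rewrite (hf_mk hev) io_mk; case: (eqVneq i0 i) => [->|ne].
  by case: b0; rewrite /= ?io_od ?io_eo ?tpermR ?tpermL.
rewrite tpermD //.
  by apply: (@mk_neqi i i0 false b0); rewrite eq_sym.
by apply: (@mk_neqi i i0 true b0); rewrite eq_sym.
Qed.

Definition fl (l : seq 'I_h) : 'S_n := (\prod_(i <- l) tperm (eo i) (od i))%g.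

Lemma flE l k : uniq l -> fl l k = if hf k \in l then io k else k.
Proof.
elim: l k => [|i l IH] k /=; first by rewrite /fl big_nil perm1.
case/andP => il ul; rewrite /fl big_cons permM tperm_io -/(fl l) in_cons.
case: eqP => [E|ne] /=.
  rewrite IH // hf_io E (negbTE il) //.
by rewrite IH.
Qed.

Lemma odd_fl l : odd_perm (fl l) = odd (size l).
Proof.
rewrite /fl -(big_map (fun i => (eo i, od i)) xpredT (fun t => tperm t.1 t.2)).
rewrite odd_perm_prod ?size_map //; apply/allP => t /mapP [i _ ->].
exact: eo_od_neq.
Qed.

Lemma blk_inj (p : 'S_h) : injective (fun k => mk (p (hf k)) (odd k)).
Proof.
move=> k1 k2 /= /(mk_inj hev) [/perm_inj E1 E2].
by rewrite -(mk_hf hev k1) -(mk_hf hev k2) E1 E2.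
Qed.
Definition blk (p : 'S_h) : 'S_n := perm (@blk_inj p).
Lemma blkE p k : blk p k = mk (p (hf k)) (odd k).
Proof. by rewrite permE. Qed.

Lemma blkM p q : blk (p * q)%g = (blk p * blk q)%g.
Proof. by apply/permP => k; rewrite !permM !blkE (hf_mk hev) (odd_mk hev) permM. Qed.
Lemma blk1 : blk 1%g = 1%g.
Proof. by apply/permP => k; rewrite blkE !perm1 mk_hf. Qed.

Lemma tperm_injf (T T' : finType) (f : T -> T') (fi : injective f) x y z :
  tperm (f x) (f y) (f z) = f (tperm x y z).
Proof.
case: (tpermP x y z) => [->|->|zx zy]; rewrite ?tpermL ?tpermR //.
by rewrite tpermD // (inj_eq fi) eq_sym; apply/eqP => E; [apply: zx | apply: zy].
Qed.

Lemma blk_tperm x y : blk (tperm x y) = (tperm (eo x) (eo y) * tperm (od x) (od y))%g.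
Proof.
apply/permP => k; have [i [b ->]] := mkP k.
rewrite blkE permM (hf_mk hev) (odd_mk hev); case: b; rewrite /mk.
  by rewrite (tpermD (eo_od_neq x i) (eo_od_neq y i)) (tperm_injf od_inj).
rewrite (tperm_injf eo_inj) [RHS]tpermD //; rewrite eq_sym; exact: eo_od_neq.
Qed.

Lemma odd_blk p : odd_perm (blk p) = false.
Proof.
have [ts -> _] := prod_tpermP p.
rewrite (big_morph blk blkM blk1) (big_morph (@odd_perm _) (@odd_permM _) (@odd_perm1 _)).
rewrite big1_seq // => t _; rewrite blk_tperm odd_permM !odd_tperm.
by rewrite (inj_eq eo_inj) (inj_eq od_inj) addbb.
Qed.

Definition Kc (g : 'S_n) := forall k, g (io k) = io (g k).

Lemma pig_inj g : Kc g -> injective (fun i => hf (g (eo i))).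
Proof.
move=> Kg i j /= E.
have [a [b Ea]] := mkP (g (eo i)); have [c [d Ec]] := mkP (g (eo j)).
rewrite Ea Ec !(hf_mk hev) in E; subst c.
have [bd|bd] := eqVneq b d.
  by rewrite -bd in Ec; apply: eo_inj; apply: (@perm_inj _ g); rewrite Ea Ec.
have : g (eo j) = g (od i).
  by rewrite -io_eo Kg Ea Ec io_mk; congr mk; move: bd; by case: (b); case: (d).
by move/perm_inj => E2; have := eo_od_neq j i; rewrite E2 eqxx.
Qed.

Lemma Kc_decomp g (Kg : Kc g) :
  g = (fl (enum [pred i | odd (g (eo i))]) * blk (perm (@pig_inj g Kg)))%g.
Proof.
apply/permP => k; rewrite permM blkE permE flE ?enum_uniq // mem_enum /=.
have [i [b ->]] := mkP k; have [a [c Ea]] := mkP (g (eo i)).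
rewrite !(hf_mk hev) inE /= Ea (odd_mk hev).
case: c Ea => Ea /=; rewrite ?io_mk !(hf_mk hev) (odd_mk hev) Ea (hf_mk hev);
  case: b => /=; rewrite ?(odd_mk hev) //.
- by rewrite -io_eo Kg Ea io_mk.
- by rewrite -io_eo Kg Ea io_mk.
Qed.

Lemma odd_Kc g (Kg : Kc g) : odd_perm g = odd #|[pred i | odd (g (eo i))]|.
Proof.
by rewrite {1}(Kc_decomp Kg) odd_permM odd_fl odd_blk addbF cardE.
Qed.

End Sign.
Lemma incr_id (m : nat) (F : 'I_m -> 'I_m) :
  (forall i j : 'I_m, (i < j)%N -> (F i < F j)%N) -> forall i, F i = i.
Proof.
case: m F => [|m] F Fi i; first by case: i.
pose G x := nat_of_ord (F (inord x)).
have Gi : forall x y, (x < y <= m)%N -> (G x < G y)%N.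
  move=> x y /andP [xy ym]; apply: Fi; rewrite !inordK //; lia.
have Gb : forall x, (G x <= m)%N.
  by move=> x; rewrite /G -ltnS; exact: ltn_ord.
have L1 : forall x, (x <= m)%N -> (x <= G x)%N.
  elim => [|x IH] xm //; have := IH (ltnW xm); have := Gi x x.+1; lia.
have L2 : forall d x, (x + d <= m)%N -> (G x + d <= m)%N.
  elim => [|d IH] x xd; first by rewrite addn0.
  have := IH x.+1; have := Gi x x.+1; lia.
apply: val_inj => /=; have := L1 i; have := L2 (m - i)%N i.
rewrite /G inord_val; have := ltn_ord i; lia.
Qed.

Section Canon.
Variable n : nat.
Hypothesis hev : ~~ odd n.
Local Notation h := n./2.
Local Notation eo := (@eo n).
Local Notation od := (@od n).
Local Notation mk := (@mk n).
Local Notation hf := (hf hev).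
Local Notation io := (@io n).
Let io_mk := io_mk hev. Let io_eo := io_eo hev. Let io_od := io_od hev.
Let hf_io := hf_io hev. Let odd_io := odd_io hev. Let hf_mk := hf_mk hev.
Let odd_mk := odd_mk hev. Let mkP := mkP hev. Let ioK := ioK hev.

Lemma canonP (s : 'S_n) : canon_pairing s ->
  (forall i, (s (eo i) < s (od i))%N) /\
  (forall i j : 'I_h, (i < j)%N -> (s (eo i) < s (eo j))%N).
Proof.
case/andP => /forallP H1 /forallP H2; split => [i|i j ij]; first exact: H1.
by have /forallP/(_ j)/implyP := H2 i; apply.
Qed.

Lemma canon_unique (s s' g : 'S_n) : canon_pairing s -> canon_pairing s' ->
  Kc g -> s = (g * s')%g -> s = s'.
Proof.
move=> /canonP [c1 c2] /canonP [c1' c2'] Kg E.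
have sE : forall k, s k = s' (g k) by move=> k; rewrite E permM.
have Ev : forall i, odd (g (eo i)) = false.
  move=> i; have [a [b Ea]] := mkP (g (eo i)); rewrite Ea odd_mk.
  case: b Ea => // Ea; have := c1 i; rewrite !sE -io_eo Kg Ea io_mk /=.
  by have := c1' a; lia.
pose F i := hf (g (eo i)).
have gE : forall i b, g (mk i b) = mk (F i) b.
  move=> i b; have [a [c Ea]] := mkP (g (eo i)).
  have Fa : F i = a by rewrite /F Ea hf_mk.
  have := Ev i; rewrite Ea odd_mk => c0; subst c; rewrite Fa.
  by case: b => //=; rewrite -io_eo Kg Ea.
have Fi : forall i j : 'I_h, (i < j)%N -> (F i < F j)%N.
  move=> i j ij; have := c2 i j ij; rewrite !sE.
  rewrite -[eo i]/(mk i false) -[eo j]/(mk j false) !gE /=.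
  case: (ltngtP (F i) (F j)) => // [ji|/val_inj ->]; last by lia.
  by have := c2' _ _ ji; lia.
have Fid := incr_id Fi.
by apply/permP => k; have [i [b ->]] := mkP k; rewrite sE gE Fid.
Qed.

Lemma Kc_inv (g : 'S_n) : Kc g -> Kc (g^-1)%g.
Proof.
move=> Kg k; apply: (@perm_inj _ g); rewrite permKV Kg permKV //.
Qed.
Lemma Kc_mul (g1 g2 : 'S_n) : Kc g1 -> Kc g2 -> Kc (g1 * g2)%g.
Proof. by move=> K1 K2 k; rewrite !permM K1 K2. Qed.

Section Exist.
Variable sg : 'S_n.
Definition iot (v : 'I_n) : 'I_n := sg (io ((sg^-1)%g v)).
Lemma iotK : involutive iot.
Proof. by move=> v; rewrite /iot permK ioK permKV. Qed.
Lemma iot_neq v : iot v != v.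
Proof.
rewrite /iot; apply/eqP => E; have := io_neq hev ((sg^-1)%g v).
by rewrite -{2}E permK eqxx.
Qed.
Lemma iot_neqn v : nat_of_ord (iot v) <> nat_of_ord v.
Proof. move=> E. have E2 : iot v = v by apply: val_inj. have := iot_neq v. by rewrite E2 eqxx. Qed.
Definition Pset : {set 'I_n} := [set v : 'I_n | (v < iot v)%N].
Definition ms := [seq v <- enum 'I_n | v \in Pset].

Lemma size_ms : size ms = h.
Proof.
rewrite /ms (_ : [seq v <- enum 'I_n | v \in Pset] = enum Pset); last first.
  by rewrite enumT deprecated_filter_index_enum.
rewrite -cardE.
have E : ~: Pset = iot @^-1: Pset.
  apply/setP => v; rewrite !inE iotK; have := @iot_neqn v; lia.
have := cardsC Pset; rewrite E card_preimset ?card_ord; last exact: can_inj iotK.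
have := nE hev; lia.
Qed.

Lemma ms_sorted : sorted (fun x y : 'I_n => (x < y)%N) ms.
Proof.
apply: sorted_filter; first by move=> x y z; apply: ltn_trans.
by rewrite -(@sorted_map _ _ val ltn) val_enum_ord iota_ltn_sorted.
Qed.

Definition W (i : 'I_h) : 'I_n := nth (eo i) ms i.
Lemma W_in i : W i \in Pset.
Proof.
have : W i \in ms by apply: mem_nth; rewrite size_ms.
by rewrite mem_filter => /andP [].
Qed.
Lemma W_lt i : (W i < iot (W i))%N.
Proof. by have := W_in i; rewrite inE. Qed.
Lemma W_mono (i j : 'I_h) : (i < j)%N -> (W i < W j)%N.
Proof.
move=> ij; rewrite /W (set_nth_default (eo i) (eo j)) ?size_ms //.
apply: (sorted_ltn_nth _ _ ms_sorted) => //; rewrite ?inE ?size_ms //.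
by move=> x y z; apply: ltn_trans.
Qed.
Lemma W_inj : injective W.
Proof.
move=> i j E; apply/val_inj/eqP; case: (ltngtP i j) => // ij.
  by have := W_mono ij; rewrite E ltnn.
by have := W_mono ij; rewrite E ltnn.
Qed.

Definition sfun (k : 'I_n) : 'I_n := if odd k then iot (W (hf k)) else W (hf k).
Lemma sfun_mk i b : sfun (mk i b) = if b then iot (W i) else W i.
Proof. by rewrite /sfun hf_mk odd_mk. Qed.

Lemma sfun_inj : injective sfun.
Proof.
move=> k1 k2; have [i [b ->]] := mkP k1; have [j [c ->]] := mkP k2.
rewrite !sfun_mk.
have X : forall i j, W i = iot (W j) -> False.
  move=> i0 j0 E; have := W_lt i0; have := W_lt j0; rewrite E iotK; lia.
case: b; case: c => E.
- by rewrite (W_inj (can_inj iotK E)).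
- by case: (X _ _ (esym E)).
- by case: (X _ _ E).
- by rewrite (W_inj E).
Qed.

Definition scan : 'S_n := perm sfun_inj.

Lemma scan_canon : canon_pairing scan.
Proof.
apply/andP; split; apply/forallP => i.
  rewrite !permE; change (sfun (mk i false) < sfun (mk i true))%N.
  by rewrite !sfun_mk W_lt.
apply/forallP => j; apply/implyP => ij.
rewrite !permE; change (sfun (mk i false) < sfun (mk j false))%N.
by rewrite !sfun_mk W_mono.
Qed.

Lemma scan_io y : scan (io y) = iot (scan y).
Proof.
have [i [b ->]] := mkP y; rewrite !permE io_mk !sfun_mk.
by case: b => //=; rewrite iotK.
Qed.

Lemma scan_K : Kc (sg * scan^-1)%g.
Proof.
move=> k; apply: (@perm_inj _ scan); rewrite !permM permKV scan_io permKV.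
by rewrite /iot permK.
Qed.

End Exist.

Lemma canon_exists (sg : 'S_n) :
  exists s, [/\ canon_pairing s, Kc (sg * s^-1)%g & sg = ((sg * s^-1) * s)%g].
Proof.
exists (scan sg); split; [exact: scan_canon | exact: scan_K | by rewrite mulgKV].
Qed.

End Canon.
Section PfSum.
Variable n : nat.
Hypothesis hev : ~~ odd n.
Local Notation h := n./2.
Local Notation eo := (@eo n).
Local Notation od := (@od n).
Local Notation mk := (@mk n).
Local Notation hf := (hf hev).
Local Notation io := (@io n).
Let io_mk := io_mk hev. Let io_eo := io_eo hev. Let io_od := io_od hev.
Let hf_mk := hf_mk hev. Let odd_mk := odd_mk hev. Let mkP := mkP hev.
Variable R : comRingType.

Definition Gt (A : 'I_n -> 'I_n -> R) (s : 'S_n) : R :=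
  (-1) ^+ odd_perm s * \prod_(i < h) A (s (eo i)) (s (od i)).

Definition PfF (A : 'I_n -> 'I_n -> R) : R := \sum_(s : 'S_n) Gt A s.

Lemma pfaffianE (A : 'I_n -> 'I_n -> R) :
  pfaffian A = \sum_(s : 'S_n | canon_pairing s) Gt A s.
Proof. by []. Qed.

Variable A : 'I_n -> 'I_n -> R.
Hypothesis skew : forall a b, A a b = - A b a.

Lemma Gt_K (g s : 'S_n) : Kc g -> Gt A (g * s)%g = Gt A s.
Proof.
move=> Kg; rewrite /Gt odd_permM (odd_Kc hev Kg) signr_addb.
pose F i := hf (g (eo i)).
have step : forall i, A ((g * s)%g (eo i)) ((g * s)%g (od i)) =
    (-1) ^+ odd (g (eo i)) * A (s (eo (F i))) (s (od (F i))).
  move=> i; rewrite !permM /F; have [a [c Ea]] := mkP (g (eo i)).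
  rewrite -io_eo Kg Ea io_mk hf_mk odd_mk.
  by case: (c) => /=; rewrite ?mul1r ?expr1 ?mulN1r // skew.
under eq_bigr do rewrite step. rewrite big_split /=.
have -> : \prod_(i < h) (-1) ^+ odd (g (eo i)) =
          (-1) ^+ #|[pred i | odd (g (eo i))]| :> R.
  rewrite -prodr_const [RHS]big_mkcond /=; apply: eq_bigr => i _.
  by rewrite inE; case: (odd _).
have -> : \prod_(i < h) A (s (eo (F i))) (s (od (F i))) =
          \prod_(i < h) A (s (eo i)) (s (od i)).
  rewrite [RHS](reindex_perm (perm (pig_inj Kg))).
  by apply: eq_bigr => i _; rewrite permE.
by rewrite signr_odd -mulrA mulrCA signrMK.
Qed.

Definition Kset : {set 'S_n} := [set g : 'S_n | [forall k, g (io k) == io (g k)]].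
Lemma KsetP (g : 'S_n) : reflect (Kc g) (g \in Kset).
Proof.
rewrite inE; apply: (iffP forallP) => [H k|H k]; first exact/eqP.
by rewrite H.
Qed.

Lemma PfF_canon : PfF A = pfaffian A *+ #|Kset|.
Proof.
rewrite /PfF pfaffianE -sumrMnl.
have step : forall sg : 'S_n, Gt A sg =
   \sum_(s : 'S_n | canon_pairing s) (if (sg * s^-1)%g \in Kset then Gt A sg else 0).
  move=> sg; rewrite -big_mkcondr /=.
  have [s0 [c0 K0 E0]] := canon_exists hev sg.
  rewrite (big_pred1 s0) // => s /=; apply/andP/eqP => [[cs /KsetP Ks]|->].
    apply: esym; apply: (canon_unique hev c0 cs (Kc_mul (Kc_inv K0) Ks)).
    by rewrite invMg invgK !mulgA mulgKV mulgKV.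
  by split => //; apply/KsetP.
rewrite (eq_bigr _ (fun sg _ => step sg)) exchange_big /=.
apply: eq_bigr => s cs; rewrite -big_mkcond /=.
rewrite (reindex (fun g => g * s)%g) /=; last first.
  by exists (fun sg => sg * s^-1)%g => x _; rewrite ?mulgK ?mulgKV.
rewrite -sumr_const; apply: eq_big => g; first by rewrite mulgK.
by rewrite mulgK => /KsetP Kg; rewrite Gt_K.
Qed.

Lemma Kset_gt0 : (0 < #|Kset|)%N.
Proof. by apply/card_gt0P; exists 1%g; apply/KsetP => k; rewrite !perm1. Qed.

End PfSum.
Section Expand.
Variable n : nat.
Hypothesis hev : ~~ odd n.
Local Notation h := n./2.
Local Notation eo := (@eo n).
Local Notation od := (@od n).
Local Notation mk := (@mk n).
Local Notation hf := (hf hev).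
Let hf_mk := hf_mk hev. Let odd_mk := odd_mk hev. Let mkP := mkP hev.
Variable R : comNzRingType.

Lemma prod_pairs (F : 'I_n -> R) :
  \prod_(k < n) F k = \prod_(i < h) (F (eo i) * F (od i)).
Proof.
rewrite (reindex (fun x : 'I_h * bool => mk x.1 x.2)) /=; last first.
  exists (fun k => (hf k, odd k)) => [[i b] _|k _] /=; first by rewrite hf_mk odd_mk.
  exact: mk_hf.
rewrite -(pair_bigA _ (fun i b => F (mk i b))) /=.
by apply: eq_bigr => i _; rewrite big_bool mulrC.
Qed.

Lemma prod_sum_expand (p : nat) (T : 'I_h -> 'I_p -> 'I_p -> R) :
  \prod_(i < h) \sum_(l < p) \sum_(l' < p) T i l l' =
  \sum_(L : {ffun 'I_n -> 'I_p}) \prod_(i < h) T i (L (eo i)) (L (od i)).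
Proof.
under eq_bigr do rewrite pair_bigA.
rewrite bigA_distr_bigA /=.
rewrite (reindex (fun L : {ffun 'I_n -> 'I_p} => [ffun i => (L (eo i), L (od i))])) /=.
  by apply: eq_bigr => L _; apply: eq_bigr => i _; rewrite ffunE.
exists (fun g : {ffun 'I_h -> 'I_p * 'I_p} =>
          [ffun k : 'I_n => if odd k then (g (hf k)).2 else (g (hf k)).1]).
  move=> L _; apply/ffunP => k; rewrite !ffunE.
  have [i [b ->]] := mkP k; rewrite hf_mk odd_mk.
  by case: b.
move=> g _; apply/ffunP => i; rewrite !ffunE /=.
rewrite -[eo i]/(mk i false) -[od i]/(mk i true) !odd_mk !hf_mk.
by case: (g i).
Qed.

Variable p : nat.
Variable u : 'I_p -> 'I_n -> R.
Variable C : 'I_p -> 'I_p -> R.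
Definition Aof (a b : 'I_n) : R := \sum_(l < p) \sum_(l' < p) C l l' * (u l a * u l' b).

Definition wgt (L : {ffun 'I_n -> 'I_p}) : R := \prod_(i < h) C (L (eo i)) (L (od i)).

Lemma PfF_expand :
  PfF Aof = \sum_(L : {ffun 'I_n -> 'I_p}) wgt L * \det (\matrix_(k, a) u (L k) a).
Proof.
rewrite /PfF /Gt.
have step : forall s : 'S_n, \prod_(i < h) Aof (s (eo i)) (s (od i)) =
    \sum_(L : {ffun 'I_n -> 'I_p}) wgt L * \prod_(k < n) u (L k) (s k).
  move=> s; rewrite /Aof prod_sum_expand; apply: eq_bigr => L _.
  by rewrite prod_pairs /wgt -big_split.
under eq_bigr do rewrite step big_distrr.
rewrite exchange_big /=; apply: eq_bigr => L _.
rewrite /determinant big_distrr /=; apply: eq_bigr => s _.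
rewrite mulrCA; congr (_ * (_ * _)); apply: eq_bigr => k _.
by rewrite mxE.
Qed.

Lemma PfF_small : (p < n)%N -> PfF Aof = 0.
Proof.
move=> pn; rewrite PfF_expand big1 // => L _.
have : ~~ injectiveb L.
  apply/negP => /injectiveP Li; have := leq_card L Li; rewrite !card_ord; lia.
case/injectivePn => k1 [k2 k12 E].
by rewrite (determinant_alternate k12) ?mulr0 // => a; rewrite !mxE E.
Qed.

End Expand.

Section ExpandSq.
Variable n : nat.
Hypothesis hev : ~~ odd n.
Local Notation h := n./2.
Local Notation eo := (@eo n).
Local Notation od := (@od n).
Variable R : comNzRingType.
Variable u : 'I_n -> 'I_n -> R.
Variable C : 'I_n -> 'I_n -> R.

Lemma PfF_square : PfF (Aof u C) = \det (\matrix_(l, a) u l a) * PfF C.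
Proof.
rewrite (PfF_expand hev) /PfF big_distrr /=.
rewrite (bigID (fun L : {ffun 'I_n -> 'I_n} => injectiveb L)) /= addrC big1 ?add0r.
  rewrite (reindex (@pval _)) /=; last first.
    pose in_Sn := insubd (1%g : 'S_n).
    by exists in_Sn => /= f Uf; first apply: val_inj; apply: insubdK.
  apply: eq_big => /= [s | s _]; rewrite ?(valP s) //.
  have -> : \matrix_(k, a) u (pval s k) a = row_perm s (\matrix_(l, a) u l a).
    by apply/matrixP => k a; rewrite !mxE pvalE.
  rewrite row_permE det_mulmx det_perm /Gt /wgt.
  under eq_bigr do rewrite pvalE.
  rewrite mulrCA [RHS]mulrCA; congr (_ * _); rewrite mulrC; congr (_ * _).
move=> L /injectivePn [k1 [k2 k12 E]].
by rewrite (determinant_alternate k12) ?mulr0 // => a; rewrite !mxE E.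
Qed.

End ExpandSq.
Fixpoint en (m : nat) : 'S_m :=
  match m return 'S_m with
  | m'.+2 => lift_perm (Ordinal (isT : (1 < m'.+2)%N)) ord_max
                       (lift_perm ord0 ord0 (en m'))
  | _ => 1%g
  end.

Lemma odd_en_dbl h : odd_perm (en (h.*2)) = false.
Proof.
elim: h => [|h IH]; first by rewrite odd_perm1.
rewrite doubleS /= !odd_lift_perm /= IH /=.
by rewrite odd_double.
Qed.

Lemma en_val_dbl h (k : 'I_(h.*2)) :
  nat_of_ord (en (h.*2) k) = if odd k then ((h.*2).-1 - k./2)%N else k./2.
Proof.
elim: h k => [|h IH] k; first by case: k.
move: k; rewrite doubleS => k /=.
case: (unliftP (Ordinal (isT : (1 < (h.*2).+2)%N)) k) => [k'|] ->; last first.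
  by rewrite lift_perm_id /=.
rewrite lift_perm_lift.
case: (unliftP ord0 k') => [k''|] ->; last first.
  by rewrite lift_perm_id /=.
rewrite lift_perm_lift /= /bump /=.
have := IH k''; have := ltn_ord k''; have := odd_double_half k''.
have := ltn_ord (en (h.*2) k'').
set e := nat_of_ord (en _ k''); rewrite !add0n negbK => H1 H2 H3 H4.
have -> : (h.*2 < 1 + e)%N = false by apply/negbTE; rewrite -leqNgt; lia.
have Hd := mul2n h; move: H1 H2 H3 H4.
by case: (odd k'') => /= H1 H2 H3 H4; lia.
Qed.

Lemma odd_en n : ~~ odd n -> odd_perm (en n) = false.
Proof. by move=> hev; have := odd_en_dbl n./2; rewrite (dblE hev). Qed.
Section Anti.
Variable n : nat.
Hypothesis hev : ~~ odd n.
Local Notation h := n./2.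
Local Notation eo := (@eo n).
Local Notation od := (@od n).
Local Notation mk := (@mk n).
Local Notation hf := (hf hev).
Let hf_mk := hf_mk hev. Let odd_mk := odd_mk hev. Let mkP := mkP hev.

Lemma en_val (k : 'I_n) :
  nat_of_ord (en n k) = if odd k then (n.-1 - k./2)%N else k./2.
Proof. by move: k; have := @en_val_dbl h; rewrite (dblE hev). Qed.

Lemma en_eo i : nat_of_ord (en n (eo i)) = i.
Proof. rewrite en_val (val_eo hev) oddM /=; lia. Qed.
Lemma en_od i : nat_of_ord (en n (od i)) = (n.-1 - i)%N.
Proof. rewrite en_val (val_od hev) /= oddM /=; lia. Qed.

Lemma en_canon : canon_pairing (en n).
Proof.
move: (nE hev) => En.
apply/andP; split; apply/forallP => i.
  change (en n (eo i) < en n (od i))%N; rewrite en_eo en_od; have := ltn_ord i; lia.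
apply/forallP => j; apply/implyP => ij.
by change (en n (eo i) < en n (eo j))%N; rewrite !en_eo.
Qed.

Lemma survivor (s : 'S_n) : canon_pairing s ->
  (forall i, (s (eo i) + s (od i))%N = n.-1) -> s = en n.
Proof.
move=> /canonP [c1 c2] sum.
have Fb : forall i, (s (eo i) < h)%N.
  by move=> i; have := c1 i; have := sum i; have := nE hev; lia.
pose F i := Ordinal (Fb i).
have Fid : forall i, F i = i.
  by apply: incr_id => i j ij; exact: c2.
have sE : forall i, nat_of_ord (s (eo i)) = i by move=> i; rewrite -[RHS](congr1 val (Fid i)).
apply/permP => k; apply: val_inj => /=; have [i [b ->]] := mkP k.
case: b; rewrite /=.
  by rewrite en_od; have := sum i; rewrite sE; lia.
by rewrite en_eo sE.
Qed.

Variable R : comNzRingType.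
Variable c : nat -> R.
Definition Cm (l l' : 'I_n) : R := if (l + l' == n.-1)%N then c l' else 0.

Lemma pfaffian_Cm : pfaffian Cm = \prod_(i < h) c (n.-1 - i)%N.
Proof.
rewrite pfaffianE (bigD1 (en n)) ?en_canon //= big1 ?addr0.
  rewrite /Gt (odd_en hev) expr0 mul1r; apply: eq_bigr => i _.
  rewrite /Cm.
  change (Cm (en n (eo i)) (en n (od i)) = c (n.-1 - i)%N).
  rewrite /Cm en_eo en_od ifT ?en_od //; apply/eqP; have := ltn_ord i; have := nE hev; lia.
move=> s /andP [cs ne].
case: (boolP [forall i, (s (eo i) + s (od i) == n.-1)%N]) => [/forallP H|].
  by rewrite (survivor cs (fun i => eqP (H i))) eqxx in ne.
rewrite negb_forall => /existsP [i Hi].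
rewrite /Gt (bigD1 i) //=.
change (Cm (s (eo i)) (s (od i))) with (if (s (eo i) + s (od i) == n.-1)%N then c (s (od i)) else 0).
by rewrite (negbTE Hi) mul0r mulr0.
Qed.

End Anti.
Section Helpers.
Variable R : comNzRingType.

Definition Ck (k l l' : nat) : R :=
  if (l + l' == k)%N then (-1) ^+ l' * ('C(k, l'))%:R else 0.

Lemma expand_pow (x y : R) (k p : nat) : k.+1 = p ->
  (x - y) ^+ k = \sum_(l < p) \sum_(l' < p) Ck k l l' * (x ^+ l * y ^+ l').
Proof.
move=> <-; rewrite exprDn exchange_big /=; apply: eq_bigr => i _.
have ik : (k - i < k.+1)%N by lia.
rewrite (bigD1 (Ordinal ik)) //= big1 ?addr0; last first.
  move=> l /eqP ne; rewrite /Ck ifF ?mul0r //; apply/negbTE/eqP => E; apply: ne.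
  apply: val_inj => /=; have := ltn_ord i; lia.
rewrite /Ck ifT; last by apply/eqP; have := ltn_ord i; lia.
rewrite (exprNn y) -mulr_natr [LHS]mulrC [X in _ * X = _]mulrCA !mulrA.
by congr (_ * _ * _); rewrite mulrC.
Qed.

Lemma Ck_skew k l l' : odd k -> Ck k l l' = - Ck k l' l.
Proof.
move=> ok; rewrite /Ck addnC; case: eqP => [E|_]; last by rewrite oppr0.
have lk : (l <= k)%N by lia.
have l'k : (l' <= k)%N by lia.
have -> : l = (k - l')%N by lia.
rewrite bin_sub // -mulNr; congr (_ * _).
rewrite -[RHS]mulN1r -exprS -[LHS]signr_odd -[RHS]signr_odd; congr (_ ^+ _).
by rewrite /= oddB //; move: ok; case: (odd k); case: (odd l').
Qed.

Lemma pow_skew (x y : R) k : odd k -> (x - y) ^+ k = - (y - x) ^+ k.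
Proof.
by move=> ok; rewrite -opprB exprNn -signr_odd ok expr1 mulN1r.
Qed.

Lemma prod_sign_pairs m :
  \prod_(i < m) \prod_(j < m | (i < j)%N) (-1 : R) = (-1) ^+ 'C(m, 2).
Proof.
elim: m => [|m IH]; first by rewrite big_ord0.
rewrite big_ord_recl.
have -> : \prod_(j < m.+1 | (@ord0 m < j)%N) (-1 : R) = (-1) ^+ m.
  rewrite big_mkcond big_ord_recl /= mul1r.

  by rewrite prodr_const card_ord.
have -> : \prod_(i < m) \prod_(j < m.+1 | (lift ord0 i < j)%N) (-1 : R) =
          \prod_(i < m) \prod_(j < m | (i < j)%N) (-1 : R).
  apply: eq_bigr => i _; rewrite big_mkcond big_ord_recl /= mul1r [RHS]big_mkcond.
  by apply: eq_bigr => j _.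
by rewrite IH -exprD binS bin1 addnC.
Qed.

Lemma prod_neg (m : nat) (f : 'I_m -> 'I_m -> R) :
  \prod_(i < m) \prod_(j < m | (i < j)%N) (- f i j) =
  (-1) ^+ 'C(m, 2) * \prod_(i < m) \prod_(j < m | (i < j)%N) f i j.
Proof.
rewrite -prod_sign_pairs -big_split /=; apply: eq_bigr => i _.
rewrite -big_split /=; apply: eq_bigr => j _; by rewrite mulN1r.
Qed.

Lemma prod_sign_lin m : \prod_(i < m) (-1) ^+ i.+1 = (-1) ^+ 'C(m.+1, 2) :> R.
Proof.
elim: m => [|m IH]; first by rewrite big_ord0.
by rewrite big_ord_recr /= IH -exprD [in RHS]binS bin1.
Qed.

Lemma sign_final h :
  (-1) ^+ 'C(h.+1, 2) = (-1) ^+ 'C(h, 2) * (-1) ^+ 'C(h.*2, 2) :> R.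
Proof.
rewrite -exprD -signr_odd -[RHS]signr_odd; congr (_ ^+ _).
rewrite binS bin1 !oddD; congr (_ (+) _).
rewrite bin2 -doubleMl doubleK oddM; case: h => //= h.
by rewrite odd_double andbT.
Qed.

End Helpers.

Lemma cancel_mulrn (k : nat) (x y : {mpoly rat[k]}) (c : nat) :
  (0 < c)%N -> x *+ c = y *+ c -> x = y.
Proof.
move=> c0 E; have := congr1 (fun z => ((c%:R : rat)^-1) *: z) E.
rewrite -!scaler_nat !scalerA mulVf ?scale1r //.
by rewrite Num.Theory.pnatr_eq0 -lt0n.
Qed.
Unset Implicit Arguments.
Lemma PfF_ext n (R : comNzRingType) (A B : 'I_n -> 'I_n -> R) :
  (forall a b, A a b = B a b) -> PfF A = PfF B.
Proof.
move=> E; apply: eq_bigr => s _; rewrite /Gt; congr (_ * _).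
by apply: eq_bigr => i _; rewrite E.
Qed.

Theorem mainTheorem12 (n : nat) (hn : (2 <= n)%N) (hev : ~~ odd n) :
  pfaffian (fun i j : 'I_n => ('X_i - 'X_j : {mpoly rat[n]}) ^+ n.-1)
    = (-1) ^+ 'C(n./2, 2) * (\prod_(k < n./2) ('C(n.-1, k))%:R)
      * \prod_(i < n) \prod_(j < n | (i < j)%N) ('X_i - 'X_j)
  /\
  (forall m : nat, (1 <= m)%N -> (2 * m < n)%N ->
     pfaffian (fun i j : 'I_n => ('X_i - 'X_j : {mpoly rat[n]}) ^+ (2 * m).-1) = 0).
Proof.
split.
  have on1 : odd n.-1 by move: hn hev; case: n => //= n' _; rewrite negbK.
  set A := fun i j : 'I_n => ('X_i - 'X_j : {mpoly rat[n]}) ^+ n.-1.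
  pose U := fun (l a : 'I_n) => ('X_a : {mpoly rat[n]}) ^+ l.
  pose Cmm := fun l l' : 'I_n => Ck {mpoly rat[n]} n.-1 l l'.
  have skA : forall a b, A a b = - A b a by move=> a b; exact: pow_skew.
  have skC : forall a b, Cmm a b = - Cmm b a by move=> a b; exact: Ck_skew.
  have E1 := PfF_canon hev skA.
  have E2 := PfF_canon hev skC.
  have E3 := PfF_square hev U Cmm.
  have E4 : PfF A = PfF (Aof U Cmm).
    apply: PfF_ext => a b; rewrite /A /Aof /U /Cmm.
    by apply: expand_pow; rewrite prednK //; lia.
  have Epf : pfaffian A = \det (\matrix_(l, a) U l a) * pfaffian Cmm.
    apply: (cancel_mulrn (Kset_gt0 n)).
    by rewrite -E1 E4 E3 E2 mulrnAr.
  rewrite Epf.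
  have -> : \det (\matrix_(l, a) U l a) =
            \prod_(i < n) \prod_(j < n | (i < j)%N) ('X_j - 'X_i).
    have -> : \matrix_(l, a) U l a = Vandermonde n (\row_a 'X_a).
      by apply/matrixP => l a; rewrite !mxE.
    rewrite det_Vandermonde; apply: eq_bigr => i _; apply: eq_bigr => j _.
    by rewrite !mxE.
  have -> : pfaffian Cmm = (-1) ^+ 'C(n./2.+1, 2) * \prod_(k < n./2) ('C(n.-1, k))%:R.
    rewrite (pfaffian_Cm hev (fun l' => (-1) ^+ l' * ('C(n.-1, l'))%:R)).
    rewrite -prod_sign_lin -big_split /=; apply: eq_bigr => i _.
    have ih : (i < n./2)%N := ltn_ord i.
    have En := nE hev.
    rewrite bin_sub; last by lia.
    congr (_ * _); rewrite -signr_odd -[RHS]signr_odd; congr (_ ^+ _).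
    rewrite (_ : (n.-1 - i = n - i.+1)%N); last by lia.
    by rewrite oddB ?(negbTE hev) //; lia.
  have -> : \prod_(i < n) \prod_(j < n | (i < j)%N) ('X_i - 'X_j : {mpoly rat[n]}) =
     \prod_(i < n) \prod_(j < n | (i < j)%N) (- ('X_j - 'X_i)).
    by apply: eq_bigr => i _; apply: eq_bigr => j _; rewrite opprB.
  rewrite prod_neg (sign_final _ n./2) (dblE hev).
  set D := \prod_(i < n) _; set P := \prod_(k < n./2) _.
  rewrite mulrC -!mulrA; congr (_ * _); exact: mulrCA.

move=> m m1 m2.
have om : odd (2 * m).-1.
  case: m m1 m2 => // m' _ _; rewrite mulnS /=; by rewrite oddM.
set A := fun i j : 'I_n => ('X_i - 'X_j : {mpoly rat[n]}) ^+ (2 * m).-1.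
pose U := fun (l : 'I_(2 * m)) (a : 'I_n) => ('X_a : {mpoly rat[n]}) ^+ l.
pose Cmm := fun l l' : 'I_(2 * m) => Ck {mpoly rat[n]} (2 * m).-1 l l'.
have skA : forall a b, A a b = - A b a by move=> a b; exact: pow_skew.
have E1 := PfF_canon hev skA.
have E4 : PfF A = PfF (Aof U Cmm).
  apply: PfF_ext => a b; rewrite /A /Aof /U /Cmm.
  by apply: expand_pow; rewrite prednK //; lia.
have E5 := PfF_small hev U Cmm m2.
apply: (cancel_mulrn (Kset_gt0 n)).
by rewrite -E1 E4 E5 mul0rn.
Qed.
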